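(* Let $S$ be a finite nonempty semigroup, and suppose $S$ satisfies an identity $x_{\lambda_1}x_{\lambda_2}\cdots x_{\lambda_\ell}=x_{\lambda'_1}x_{\lambda'_2}\cdots x_{\lambda'_{\ell'}}$ (with $\ell,\ell'\ge 1$ and indices $\lambda_a,\lambda'_b$ drawn from a set of variables $\{x_1,x_2,x_3,\dots\}$) for every substitution of elements of $S$ for the variables. If $\lambda_1\neq\lambda'_1$, then $S$ is $K$-thin. Dually, if $\lambda_\ell\neq\lambda'_{\ell'}$, then $S$ is $K$-thin.
   Context: For a finite nonempty semigroup $S$, the minimal ideal $K(S)$ is the intersection of all nonempty two-sided ideals of $S$. A Rees matrix semigroup $\mathcal{M}(H;I,J;p)$, for sets $I,J$, a group $H$ and a function $p\colon J\times I\to H$, is the set $I\times H\times J$ with product $(i,h,j)(i',h',j')=(i,h\,p(j,i')\,h',j')$. It is known that $K(S)$ is always isomorphic to such a Rees matrix semigroup with $H$ a finite group and $p$ normalized (i.e. $p(j_0,i)=e_H$ and $p(j,i_0)=e_H$ for some fixed $i_0\in I$, $j_0\in J$ and all $i,j$). $S$ is called $K$-thin if $K(S)$ has such a normalized Rees matrix structure with $|I|=1$ or $|J|=1$; equivalently, $K(S)$ is left-simple or right-simple. Examples of such identities are $xy=yx$ (commutativity) and $xya=yxa$ (left-commutativity). *)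

(* Defs.v *)
From mathcomp Require Import all_boot.
Set Implicit Arguments. Unset Strict Implicit. Unset Printing Implicit Defensive.

(* A (finite) semigroup is a finType T with an associative operation op. *)

(* Only meaningful for nonempty words;
   the empty word gets a junk value (never used, words are assumed nonempty). *)
Definition word_eval (T : Type) (op : T -> T -> T) (f : nat -> T) (w : seq nat) : T :=
  match w with
  | [::] => f 0
  | h :: t => foldl (fun a i => op a (f i)) (f h) t
  end.

Definition is_ideal (T : finType) (op : T -> T -> T) (I : {set T}) : bool :=
  [forall x, forall y, (y \in I) ==> ((op x y \in I) && (op y x \in I))].

Definition minimal_ideal (T : finType) (op : T -> T -> T) : {set T} :=
  \bigcap_(I : {set T} | (I != set0) && is_ideal op I) I.

Definition left_simple (T : finType) (op : T -> T -> T) (K : {set T}) : Prop :=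
  forall L : {set T}, L != set0 -> L \subset K ->
    (forall a b, a \in K -> b \in L -> op a b \in L) -> L = K.

Definition right_simple (T : finType) (op : T -> T -> T) (K : {set T}) : Prop :=
  forall R : {set T}, R != set0 -> R \subset K ->
    (forall a b, a \in R -> b \in K -> op a b \in R) -> R = K.

Definition K_thin (T : finType) (op : T -> T -> T) : Prop :=
  left_simple op (minimal_ideal op) \/ right_simple op (minimal_ideal op).

(* Main.v *)
Require Import Defs.
From mathcomp Require Import all_boot.

Lemma K_ideal {T : finType} (op : T -> T -> T) x y :
  y \in minimal_ideal op ->
  (op x y \in minimal_ideal op) && (op y x \in minimal_ideal op).
Proof.
move=> /bigcapP Hy; apply/andP; split; apply/bigcapP => I HI;
  have := Hy I HI; case/andP: HI => _ /forallP/(_ x)/forallP/(_ y)/implyP H;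
  by move/H/andP=> [].
Qed.

Lemma K_l {T : finType} (op : T -> T -> T) x y :
  y \in minimal_ideal op -> op x y \in minimal_ideal op.
Proof. by move/(K_ideal op x)/andP=> []. Qed.

Lemma K_r {T : finType} (op : T -> T -> T) x y :
  x \in minimal_ideal op -> op x y \in minimal_ideal op.
Proof. by move/(K_ideal op y)/andP=> []. Qed.

Lemma K_min {T : finType} (op : T -> T -> T) (I : {set T}) :
  I != set0 -> is_ideal op I -> minimal_ideal op \subset I.
Proof. by move=> H1 H2; apply: bigcap_inf; rewrite H1. Qed.

Lemma K_ne {T : finType} (op : T -> T -> T) :
  0 < #|T| -> minimal_ideal op != set0.
Proof.
move=> Tne.
have P0 : ([set: T] != set0) && is_ideal op [set: T].
  rewrite -card_gt0 cardsT Tne /=.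
  by apply/forallP => x; apply/forallP => y; rewrite !inE.
case: (@arg_minnP _ [set: T] (fun I : {set T} => (I != set0) && is_ideal op I) (fun I : {set T} => #|I|) P0) => M /andP[Mne Mid] Mmin.
case/set0Pn: Mne => m mM.
have : M \subset minimal_ideal op.
  apply/bigcapsP => I /andP[Ine Iid].
  case/set0Pn: Ine => i iI.
  have MIid : is_ideal op (M :&: I).
    apply/forallP => x; apply/forallP => y; apply/implyP; rewrite inE => /andP[yM yI].
    move: Mid => /forallP/(_ x)/forallP/(_ y)/implyP/(_ yM)/andP[h1 h2].
    move: Iid => /forallP/(_ x)/forallP/(_ y)/implyP/(_ yI)/andP[h3 h4].
    by rewrite !inE h1 h2 h3 h4.
  have MIne : M :&: I != set0.
    apply/set0Pn; exists (op m i).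
    move: Mid => /forallP/(_ i)/forallP/(_ m)/implyP/(_ mM)/andP[_ h2].
    move: Iid => /forallP/(_ m)/forallP/(_ i)/implyP/(_ iI)/andP[h3 _].
    by rewrite inE h2 h3.
  have := Mmin _ (introT andP (conj MIne MIid)).
  move=> hc.
  have : M :&: I == M by rewrite eqEcard subsetIl hc.
  by move/eqP/setIidPl.
move=> MK; apply/set0Pn; exists m; exact: (subsetP MK).
Qed.

Lemma K_gen {T : finType} (op : T -> T -> T) (op_assoc : associative op) b k :
  b \in minimal_ideal op -> k \in minimal_ideal op ->
  exists s t, b = op s (op k t).
Proof.
move=> bK kK.
pose I := [set z | [exists s, exists t, z == op s (op k t)]].
have Ine : I != set0.
  apply/set0Pn; exists (op k (op k k)); rewrite inE.
  by apply/existsP; exists k; apply/existsP; exists k.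
have Iid : is_ideal op I.
  apply/forallP => x; apply/forallP => y; apply/implyP.
  rewrite inE => /existsP[s /existsP[t /eqP->]].
  rewrite !inE; apply/andP; split.
    by apply/existsP; exists (op x s); apply/existsP; exists t; rewrite !op_assoc.
  by apply/existsP; exists s; apply/existsP; exists (op t x); rewrite !op_assoc.
have := subsetP (K_min op I Ine Iid) b bK.
by rewrite inE => /existsP[s /existsP[t /eqP->]]; exists s, t.
Qed.

Definition pw {T : Type} (op : T -> T -> T) w n := iter n (op w) w.

Lemma pwS {T : Type} (op : T -> T -> T) w n : pw op w n.+1 = op w (pw op w n).
Proof. by []. Qed.

Lemma pwD {T : Type} (op : T -> T -> T) (op_assoc : associative op) w a b :
  pw op w (a + b).+1 = op (pw op w a) (pw op w b).
Proof.
elim: a => [|a IH]; first by rewrite add0n pwS.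
by rewrite addSn pwS IH op_assoc -pwS.
Qed.

Lemma pw_rep {T : finType} (op : T -> T -> T) (op_assoc : associative op) w :
  exists p k, pw op w p = pw op w (p + k).+1.
Proof.
pose g := fun i : 'I_(#|T|.+1) => pw op w i.
have : ~~ injectiveb g.
  apply/negP => /injectiveP /leq_card; by rewrite card_ord ltnn.
case/injectivePn => i [j nij eij].
case: (ltngtP i j) => hij; last by move: nij; rewrite (val_inj hij) eqxx.
- exists i, (j - i.+1); by rewrite -addSn subnKC.
- exists j, (i - j.+1); by rewrite -addSn subnKC.
Qed.

Lemma stab {T : finType} (op : T -> T -> T) (op_assoc : associative op) x y :
  x \in minimal_ideal op -> y \in minimal_ideal op ->
  exists u, x = op (op x y) u.
Proof.
move=> xK yK.
have [s [t Hst]] := K_gen op op_assoc _ _ xK (K_r op _ y xK).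
pose w := op y t.
have Hs : x = op s (op x w) by rewrite {1}Hst /w !op_assoc.
have It : forall n, exists s', x = op s' (op x (pw op w n)).
  elim=> [|n [s' Hs']]; first by exists s.
  exists (op s' s); rewrite pwS [in LHS]Hs' {1}Hs !op_assoc //.
have [p [k Hpk]] := pw_rep op op_assoc w.
have [s' Hs'] := It p.
have Hs'' : x = op (op s' x) (pw op w p) by rewrite -op_assoc.
have Hx : x = op x (pw op w k).
  by rewrite {1}Hs'' Hpk (pwD op op_assoc) op_assoc -Hs''.
clear Hpk; case: k Hx => [|k] Hx.
  by exists t; rewrite -op_assoc.
by exists (op t (pw op w k)); rewrite {1}Hx pwS /w !op_assoc.
Qed.

Lemma foldl_op {T : Type} (op : T -> T -> T) (op_assoc : associative op) (f : nat -> T) c v t :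
  foldl (fun a i => op a (f i)) (op c v) t = op c (foldl (fun a i => op a (f i)) v t).
Proof.
elim: t v => [|h t IH] v //=.
by rewrite -op_assoc IH.
Qed.

Lemma foldl_in {T : finType} (op : T -> T -> T) (f : nat -> T) (P : {set T}) a t :
  (forall a b, a \in P -> b \in minimal_ideal op -> op a b \in P) ->
  (forall k, f k \in minimal_ideal op) -> a \in P ->
  foldl (fun a i => op a (f i)) a t \in P.
Proof.
move=> HP Hf; elim: t a => [|h t IH] a //= aP.
by apply: IH; apply: HP.
Qed.

Lemma head_rs {T : finType} (op : T -> T -> T) (op_assoc : associative op)
    (lam lam' : seq nat) (lam_ne : 0 < size lam) (lam'_ne : 0 < size lam')
    (ident : forall f : nat -> T, word_eval op f lam = word_eval op f lam') :
  head 0 lam != head 0 lam' -> right_simple op (minimal_ideal op).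
Proof.
case: lam lam_ne ident => [|i t] // _; case: lam' lam'_ne => [|j t'] // _ ident /= nij.
move=> R Rne RK Rcl.
apply/eqP; rewrite eqEsubset RK /=.
apply/subsetP => c cK.
case/set0Pn: Rne => a aR.
have aK := subsetP RK a aR.
pose f k := if k == i then a else c.
have fK : forall k, f k \in minimal_ideal op by move=> k; rewrite /f; case: ifP.
have := ident f.
have fi : f i = a by rewrite /f eqxx.
have fj : f j = c by rewrite /f eq_sym (negbTE nij).
rewrite /= fi fj; clear ident.
have LR := foldl_in op f R a t Rcl fK aR.
move=> E; rewrite E in LR.
case: t' E LR => [|h t''] E //=.
rewrite (foldl_op op op_assoc) => LR.
set v := foldl _ _ _ in LR.
have vK : v \in minimal_ideal op by apply: (foldl_in op f); [move=> ? ? ? ?; apply: K_l| |].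
have [u Hc] := stab op op_assoc c v cK vK.
have -> : c = op (op c v) (op (op u v) u) by rewrite !op_assoc -!Hc.
apply: Rcl => //; apply: K_r; apply: K_l; exact: vK.
Qed.

Lemma we_cons {T : Type} (op : T -> T -> T) (op_assoc : associative op) f x w :
  0 < size w -> word_eval op f (x :: w) = op (f x) (word_eval op f w).
Proof. by case: w => [|h t] //= _; rewrite -(foldl_op op op_assoc). Qed.

Lemma we_rcons {T : Type} (op : T -> T -> T) f x w :
  0 < size w -> word_eval op f (rcons w x) = op (word_eval op f w) (f x).
Proof. by case: w => [|h t] //= _; rewrite foldl_rcons. Qed.

Lemma we_rev {T : Type} (op : T -> T -> T) (op_assoc : associative op) f w :
  0 < size w -> word_eval (fun x y => op y x) f (rev w) = word_eval op f w.
Proof.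
elim: w => [|h t IH] // _.
case: t IH => [|h' t'] IH; first by [].
by rewrite rev_cons we_rcons ?size_rev // IH // (we_cons op op_assoc f h (h' :: t')).
Qed.

Lemma head_rev (l : seq nat) : head 0 (rev l) = last 0 l.
Proof. by case/lastP: l => [|s x] //; rewrite rev_rcons last_rcons. Qed.

Lemma K_op {T : finType} (op : T -> T -> T) :
  minimal_ideal (fun x y => op y x) = minimal_ideal op.
Proof.
rewrite /minimal_ideal; apply: eq_bigl => I; congr (_ && _).
apply/forallP/forallP => H x; apply/forallP => y; apply/implyP => yI;
  by move: H => /(_ x)/forallP/(_ y)/implyP/(_ yI); rewrite andbC.
Qed.

Theorem theorem7p9 (T : finType) (op : T -> T -> T)
    (op_assoc : associative op) (T_nonempty : 0 < #|T|)
    (lam lam' : seq nat) (lam_ne : 0 < size lam) (lam'_ne : 0 < size lam')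
    (ident : forall f : nat -> T, word_eval op f lam = word_eval op f lam') :
  (head 0 lam != head 0 lam' -> K_thin op) /\
  (last 0 lam != last 0 lam' -> K_thin op).
Proof.
split=> H.
  by right; apply: (head_rs op op_assoc lam lam').
left.
have assoc' : associative (fun x y => op y x) by move=> x y z; rewrite op_assoc.
have := head_rs (fun x y => op y x) assoc' (rev lam) (rev lam').
rewrite !size_rev !head_rev K_op => /(_ lam_ne lam'_ne).
have ident' : forall f : nat -> T, word_eval (fun x y => op y x) f (rev lam) =
   word_eval (fun x y => op y x) f (rev lam').
  by move=> f; rewrite !we_rev.
move=> /(_ ident' H) Hr L Lne LK Lcl.
by apply: Hr => // a b aL bK; apply: Lcl.
Qed.
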